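(* Let $\mathcal C$ be a Markov category with conditionals and precise supports, $X$ an object and $o:I\to X$ a deterministic state. Then, as morphisms $X\leadsto X$ of $\mathrm{Obs}(\mathcal C)$, \[(X,\mathrm{copy}_X,o)\approx(X,o\otimes\mathrm{id}_X,o),\] where in both triples the second tensor factor of the codomain $X\otimes X$ is the condition object (and $o\otimes\mathrm{id}_X:X\cong I\otimes X\to X\otimes X$). In programming notation: $(x:= o);x\approx(x:=o);o$.
   Context: A Markov category is a symmetric monoidal category $(\mathcal C,\otimes,I)$ (assumed strict) in which every object $X$ carries a commutative comonoid $\mathrm{copy}_X$, $\mathrm{del}_X$ compatible with $\otimes$, and $I$ is terminal. A morphism $f$ is deterministic if $\mathrm{copy}_Y f=(f\otimes f)\mathrm{copy}_X$. $\langle f,g\rangle=(f\otimes g)\mathrm{copy}_A$; marginals $f_X=(\mathrm{id}_X\otimes\mathrm{del}_Y)f$, $f_Y=(\mathrm{del}_X\otimes\mathrm{id}_Y)f$. A conditional of $f:A\to X\otimes Y$ w.r.t. $X$ is $f|_X:X\otimes A\to Y$ with $f=(\mathrm{id}_X\otimes f|_X)(\mathrm{copy}_X\otimes\mathrm{id}_A)(f_X\otimes\mathrm{id}_A)\mathrm{copy}_A$ (symmetrically w.r.t. $Y$); $\mathcal C$ has conditionals if these always exist. $f=_\mu g$ means $\langle\mathrm{id},f\rangle\mu=\langle\mathrm{id},g\rangle\mu$; $\mu\ll\nu$ means $f=_\nu g\Rightarrow f=_\mu g$ for all $f,g$. Precise supports: for deterministic $x:I\to X$, $y:I\to Y$,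 any $f:X\to Y$, $\mu:I\to X$: $x\otimes y\ll\langle\mathrm{id}_X,f\rangle\mu$ iff ($x\ll\mu$ and $y\ll fx$). $\mathrm{Obs}(\mathcal C)$: same objects as $\mathcal C$; morphisms $X\leadsto Y$ are triples $(K,f,o)$, $f:X\to Y\otimes K$, $o:I\to K$ deterministic; composition $(K',f',o')\bullet(K,f,o)=(K'\otimes K,(f'\otimes\mathrm{id}_K)f,o'\otimes o)$; tensor of $(K,f,o):X\leadsto Y$, $(K',f',o'):X'\leadsto Y'$ is $(K'\otimes K,(\mathrm{id}_{Y'}\otimes\mathrm{swap}_{K',Y}\otimes\mathrm{id}_K)(f'\otimes f),o'\otimes o)$. For states $(K,\psi,o),(K',\psi',o'):I\leadsto X$, $(K,\psi,o)\sim(K',\psi',o')$ iff either ($o\ll\psi_K$, $o'\ll\psi'_{K'}$ and $\psi|_Ko=\psi'|_{K'}o'$, where $\psi|_K:K\to X$ is a conditional w.r.t. $K$) or ($o\not\ll\psi_K$ and $o'\not\ll\psi'_{K'}$). For $F,G:X\leadsto Y$, $F\approx G$ iff for every object $A$ and every state $\Psi:I\leadsto A\otimes X$, $(\mathrm{Id}_A\otimes F)\bullet\Psi\sim(\mathrm{Id}_A\otimes G)\bullet\Psi$. The conditioning effect $(:=o):X\leadsto I$ is $(X,\mathrm{id}_X,o)$. *)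

(* Defs.v *)
Set Implicit Arguments.

Record SMC : Type := {
  Ob : Type;
  Hom : Ob -> Ob -> Type;
  idm : forall A, Hom A A;
  comp : forall {A B C}, Hom B C -> Hom A B -> Hom A C;
  comp_idl : forall A B (f : Hom A B), comp (idm B) f = f;
  comp_idr : forall A B (f : Hom A B), comp f (idm A) = f;
  comp_assoc : forall A B C D (f : Hom A B) (g : Hom B C) (h : Hom C D),
      comp h (comp g f) = comp (comp h g) f;

  unit : Ob;
  ot : Ob -> Ob -> Ob;
  tens : forall {A B C D}, Hom A B -> Hom C D -> Hom (ot A C) (ot B D);
  tens_id : forall A B, tens (idm A) (idm B) = idm (ot A B);
  tens_comp : forall A B C A' B' C' (f : Hom A B) (g : Hom B C)
      (f' : Hom A' B') (g' : Hom B' C'),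
      tens (comp g f) (comp g' f') = comp (tens g g') (tens f f');

  assoc : forall A B C, Hom (ot (ot A B) C) (ot A (ot B C));
  assoc_inv : forall A B C, Hom (ot A (ot B C)) (ot (ot A B) C);
  assoc_iso1 : forall A B C, comp (assoc A B C) (assoc_inv A B C) = idm _;
  assoc_iso2 : forall A B C, comp (assoc_inv A B C) (assoc A B C) = idm _;
  assoc_nat : forall A A' B B' C C' (f : Hom A A') (g : Hom B B') (h : Hom C C'),
      comp (assoc A' B' C') (tens (tens f g) h)
      = comp (tens f (tens g h)) (assoc A B C);

  lunit : forall A, Hom (ot unit A) A;
  lunit_inv : forall A, Hom A (ot unit A);
  lunit_iso1 : forall A, comp (lunit A) (lunit_inv A) = idm A;
  lunit_iso2 : forall A, comp (lunit_inv A) (lunit A) = idm _;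
  lunit_nat : forall A B (f : Hom A B),
      comp (lunit B) (tens (idm unit) f) = comp f (lunit A);

  runit : forall A, Hom (ot A unit) A;
  runit_inv : forall A, Hom A (ot A unit);
  runit_iso1 : forall A, comp (runit A) (runit_inv A) = idm A;
  runit_iso2 : forall A, comp (runit_inv A) (runit A) = idm _;
  runit_nat : forall A B (f : Hom A B),
      comp (runit B) (tens f (idm unit)) = comp f (runit A);

  swap : forall A B, Hom (ot A B) (ot B A);
  swap_invol : forall A B, comp (swap B A) (swap A B) = idm _;
  swap_nat : forall A A' B B' (f : Hom A A') (g : Hom B B'),
      comp (swap A' B') (tens f g) = comp (tens g f) (swap A B);

  pentagon : forall A B C D,
      comp (assoc A B (ot C D)) (assoc (ot A B) C D)
      = comp (tens (idm A) (assoc B C D))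
             (comp (assoc A (ot B C) D) (tens (assoc A B C) (idm D)));
  triangle : forall A B,
      comp (tens (idm A) (lunit B)) (assoc A unit B) = tens (runit A) (idm B);
  hexagon : forall A B C,
      comp (assoc B C A) (comp (swap A (ot B C)) (assoc A B C))
      = comp (tens (idm B) (swap A C))
             (comp (assoc B A C) (tens (swap A B) (idm C)))
}.

Arguments Hom {s} _ _.
Arguments idm {s} A.
Arguments comp {s A B C} _ _.
Arguments unit {s}.
Arguments ot {s} _ _.
Arguments tens {s A B C D} _ _.
Arguments assoc {s} A B C.
Arguments assoc_inv {s} A B C.
Arguments lunit {s} A.
Arguments lunit_inv {s} A.
Arguments runit {s} A.
Arguments runit_inv {s} A.
Arguments swap {s} A B.

Declare Scope mc_scope.
Delimit Scope mc_scope with mc.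
Open Scope mc_scope.
Notation "g ∘ f" := (comp g f) (at level 40, left associativity) : mc_scope.
Notation "A ⊗ B" := (ot A B) (at level 35, right associativity) : mc_scope.
Notation "f ⊗⊗ g" := (tens f g) (at level 35, right associativity) : mc_scope.

Definition mid4 (C : SMC) (A B X D : Ob C) : Hom ((A ⊗ B) ⊗ (X ⊗ D)) ((A ⊗ X) ⊗ (B ⊗ D)) :=
  assoc_inv A X (B ⊗ D)
  ∘ (idm A ⊗⊗ assoc X B D)
  ∘ (idm A ⊗⊗ (swap B X ⊗⊗ idm D))
  ∘ (idm A ⊗⊗ assoc_inv B X D)
  ∘ assoc A B (X ⊗ D).

Arguments mid4 {C} A B X D.

Record MarkovCat : Type := {
  msmc :> SMC;
  copy : forall A : Ob msmc, Hom A (A ⊗ A);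
  del : forall A : Ob msmc, Hom A unit;
  copy_counit_l : forall A, lunit A ∘ (del A ⊗⊗ idm A) ∘ copy A = idm A;
  copy_counit_r : forall A, runit A ∘ (idm A ⊗⊗ del A) ∘ copy A = idm A;
  copy_coassoc : forall A,
      assoc A A A ∘ (copy A ⊗⊗ idm A) ∘ copy A = (idm A ⊗⊗ copy A) ∘ copy A;
  copy_comm : forall A, swap A A ∘ copy A = copy A;
  copy_tensor : forall A B,
      copy (A ⊗ B) = mid4 A A B B ∘ (copy A ⊗⊗ copy B);
  del_tensor : forall A B, del (A ⊗ B) = lunit unit ∘ (del A ⊗⊗ del B);
  copy_unit : copy unit = lunit_inv unit;
  del_unit : del unit = idm unit;
  unit_terminal : forall A (f : Hom A unit), f = del A
}.

Arguments copy {m} A.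
Arguments del {m} A.

Section MarkovDefs.
Context {C : MarkovCat}.

Definition deterministic {X Y : Ob C} (f : Hom X Y) : Prop :=
  copy Y ∘ f = (f ⊗⊗ f) ∘ copy X.

Definition pairing {A X Y : Ob C} (f : Hom A X) (g : Hom A Y) : Hom A (X ⊗ Y) :=
  (f ⊗⊗ g) ∘ copy A.

Definition marg1 {A X Y : Ob C} (f : Hom A (X ⊗ Y)) : Hom A X :=
  runit X ∘ (idm X ⊗⊗ del Y) ∘ f.
Definition marg2 {A X Y : Ob C} (f : Hom A (X ⊗ Y)) : Hom A Y :=
  lunit Y ∘ (del X ⊗⊗ idm Y) ∘ f.

(* g : X ⊗ A -> Y is a conditional of f : A -> X ⊗ Y w.r.t. X *)
Definition is_cond1 {A X Y : Ob C} (f : Hom A (X ⊗ Y)) (g : Hom (X ⊗ A) Y) : Prop :=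
  f = (idm X ⊗⊗ g) ∘ assoc X X A ∘ (copy X ⊗⊗ idm A)
      ∘ (marg1 f ⊗⊗ idm A) ∘ copy A.

(* g : Y ⊗ A -> X is a conditional of f : A -> X ⊗ Y w.r.t. Y *)
Definition is_cond2 {A X Y : Ob C} (f : Hom A (X ⊗ Y)) (g : Hom (Y ⊗ A) X) : Prop :=
  f = (g ⊗⊗ idm Y) ∘ swap Y (Y ⊗ A) ∘ assoc Y Y A ∘ (copy Y ⊗⊗ idm A)
      ∘ (marg2 f ⊗⊗ idm A) ∘ copy A.

Definition has_conditionals : Prop :=
  forall (A X Y : Ob C) (f : Hom A (X ⊗ Y)),
    (exists g, is_cond1 f g) /\ (exists g, is_cond2 f g).

Definition as_eq {X Y : Ob C} (mu : Hom unit X) (f g : Hom X Y) : Prop :=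
  pairing (idm X) f ∘ mu = pairing (idm X) g ∘ mu.

Definition abs_cont {X : Ob C} (mu nu : Hom unit X) : Prop :=
  forall (Y : Ob C) (f g : Hom X Y), as_eq nu f g -> as_eq mu f g.

Definition tens_st {X Y : Ob C} (x : Hom unit X) (y : Hom unit Y) : Hom unit (X ⊗ Y) :=
  (x ⊗⊗ y) ∘ lunit_inv unit.

Definition precise_supports : Prop :=
  forall (X Y : Ob C) (x : Hom unit X) (y : Hom unit Y) (f : Hom X Y) (mu : Hom unit X),
    deterministic x -> deterministic y ->
    (abs_cont (tens_st x y) (pairing (idm X) f ∘ mu)
     <-> (abs_cont x mu /\ abs_cont y (f ∘ x))).

(* A morphism X ~> Y of Obs(C): (K, f : X -> Y ⊗ K, o : I -> K).
   Determinism of o is imposed separately where needed. *)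
Record ObsHom (X Y : Ob C) : Type := mkObs {
  obsK : Ob C;
  obsF : Hom X (Y ⊗ obsK);
  obsO : Hom unit obsK
}.

Arguments mkObs {X Y} _ _ _.

Definition obs_comp {X Y Z : Ob C} (G : ObsHom Y Z) (F : ObsHom X Y) : ObsHom X Z :=
  mkObs (obsK G ⊗ obsK F)
        (assoc Z (obsK G) (obsK F) ∘ (obsF G ⊗⊗ idm (obsK F)) ∘ obsF F)
        (tens_st (obsO G) (obsO F)).

Definition obs_tens {X' Y' X Y : Ob C} (F' : ObsHom X' Y') (F : ObsHom X Y)
  : ObsHom (X' ⊗ X) (Y' ⊗ Y) :=
  mkObs (obsK F' ⊗ obsK F)
        (mid4 Y' (obsK F') Y (obsK F) ∘ (obsF F' ⊗⊗ obsF F))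
        (tens_st (obsO F') (obsO F)).

Definition obs_id (A : Ob C) : ObsHom A A :=
  mkObs unit (runit_inv A) (idm unit).

(* equivalence of states (K,psi,o) ~ (K',psi',o') : I ~> X.
   psi|_K : K ⊗ I -> X is a conditional w.r.t. K; "psi|_K o" is
   psi|_K ∘ ρ^{-1}_K ∘ o. *)
Definition state_equiv {X : Ob C} (P Q : ObsHom unit X) : Prop :=
  (abs_cont (obsO P) (marg2 (obsF P)) /\ abs_cont (obsO Q) (marg2 (obsF Q)) /\
   forall (cP : Hom (obsK P ⊗ unit) X) (cQ : Hom (obsK Q ⊗ unit) X),
     is_cond2 (obsF P) cP -> is_cond2 (obsF Q) cQ ->
     cP ∘ runit_inv (obsK P) ∘ obsO P = cQ ∘ runit_inv (obsK Q) ∘ obsO Q)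
  \/
  (~ abs_cont (obsO P) (marg2 (obsF P)) /\ ~ abs_cont (obsO Q) (marg2 (obsF Q))).

(* observational equivalence F ≈ G of morphisms X ~> Y of Obs(C):
   states Psi of Obs(C) have a deterministic observation o. *)
Definition obs_equiv {X Y : Ob C} (F G : ObsHom X Y) : Prop :=
  forall (A : Ob C) (Psi : ObsHom unit (A ⊗ X)),
    deterministic (obsO Psi) ->
    state_equiv (obs_comp (obs_tens (obs_id A) F) Psi)
                (obs_comp (obs_tens (obs_id A) G) Psi).

End MarkovDefs.


Arguments has_conditionals C : clear implicits.
Arguments precise_supports C : clear implicits.
Arguments mkObs {C X Y} _ _ _.

(* Main.v *)
Require Import Defs.
From Stdlib Require Import Classical Setoid Morphisms.
Open Scope mc_scope.
Section S.
Context {C : MarkovCat}.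
Notation I := (@unit C).

Lemma kv {A B : Ob C} (p q : Hom A B) : p = q -> forall Z (k : Hom Z A), p ∘ k = q ∘ k.
Proof. intros ->; reflexivity. Qed.
Ltac nrm := repeat rewrite <- comp_assoc; rewrite ?comp_idl, ?comp_idr.
Ltac mkk H H' := pose proof (kv _ _ H) as H'; repeat setoid_rewrite <- comp_assoc in H';
   repeat setoid_rewrite comp_idl in H'.
Ltac rw H := first [rewrite H | let H' := fresh in mkk H H'; rewrite H'; clear H'].
Ltac rwl H := first [rewrite <- H | let H' := fresh in mkk H H'; rewrite <- H'; clear H'].

Lemma tc {A B D A' B' D' : Ob C} (f : Hom A B) (g : Hom B D) (f' : Hom A' B') (g' : Hom B' D') :
  (g ⊗⊗ g') ∘ (f ⊗⊗ f') = (g ∘ f) ⊗⊗ (g' ∘ f').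
Proof. now rewrite tens_comp. Qed.

Lemma tc_k {A B D A' B' D' Z : Ob C} (f : Hom A B) (g : Hom B D) (f' : Hom A' B') (g' : Hom B' D') (k : Hom Z _) :
  (g ⊗⊗ g') ∘ ((f ⊗⊗ f') ∘ k) = (g ∘ f) ⊗⊗ (g' ∘ f') ∘ k.
Proof. now rewrite comp_assoc, tc. Qed.

Ltac tcs := nrm; repeat (rewrite tc_k || rewrite tc); rewrite ?tens_id; nrm; rewrite ?tens_id, ?comp_idl, ?comp_idr.

Lemma split_l {A B A' B' : Ob C} (f : Hom A B) (g : Hom A' B') : f ⊗⊗ g = (f ⊗⊗ idm B') ∘ (idm A ⊗⊗ g).
Proof. now rewrite tc, comp_idl, comp_idr. Qed.
Lemma split_r {A B A' B' : Ob C} (f : Hom A B) (g : Hom A' B') : f ⊗⊗ g = (idm B ⊗⊗ g) ∘ (f ⊗⊗ idm A').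
Proof. now rewrite tc, comp_idl, comp_idr. Qed.

Lemma ai1k (A B D Z : Ob C) (k : Hom Z _) : assoc A B D ∘ (assoc_inv A B D ∘ k) = k.
Proof. now rewrite comp_assoc, assoc_iso1, comp_idl. Qed.
Lemma ai2k (A B D Z : Ob C) (k : Hom Z _) : assoc_inv A B D ∘ (assoc A B D ∘ k) = k.
Proof. now rewrite comp_assoc, assoc_iso2, comp_idl. Qed.
Lemma li1k (A Z : Ob C) (k : Hom Z _) : lunit A ∘ (lunit_inv A ∘ k) = k.
Proof. now rewrite comp_assoc, lunit_iso1, comp_idl. Qed.
Lemma li2k (A Z : Ob C) (k : Hom Z _) : lunit_inv A ∘ (lunit A ∘ k) = k.
Proof. now rewrite comp_assoc, lunit_iso2, comp_idl. Qed.
Lemma ri1k (A Z : Ob C) (k : Hom Z _) : runit A ∘ (runit_inv A ∘ k) = k.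
Proof. now rewrite comp_assoc, runit_iso1, comp_idl. Qed.
Lemma ri2k (A Z : Ob C) (k : Hom Z _) : runit_inv A ∘ (runit A ∘ k) = k.
Proof. now rewrite comp_assoc, runit_iso2, comp_idl. Qed.
Lemma swk (A B Z : Ob C) (k : Hom Z _) : swap B A ∘ (swap A B ∘ k) = k.
Proof. now rewrite comp_assoc, swap_invol, comp_idl. Qed.

Ltac isos := repeat first [rewrite assoc_iso1 | rewrite assoc_iso2 | rewrite lunit_iso1 | rewrite lunit_iso2
  | rewrite runit_iso1 | rewrite runit_iso2 | rewrite swap_invol | rewrite ai1k | rewrite ai2k | rewrite li1k
  | rewrite li2k | rewrite ri1k | rewrite ri2k | rewrite swk | rewrite comp_idl | rewrite comp_idr | rewrite tens_id].

Lemma assoc_inv_nat {A A' B B' D D' : Ob C} (f : Hom A A') (g : Hom B B') (h : Hom D D') :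
  assoc_inv A' B' D' ∘ (f ⊗⊗ (g ⊗⊗ h)) = ((f ⊗⊗ g) ⊗⊗ h) ∘ assoc_inv A B D.
Proof.
  transitivity (assoc_inv A' B' D' ∘ ((f ⊗⊗ (g ⊗⊗ h)) ∘ (assoc A B D ∘ assoc_inv A B D))).
  { now rewrite assoc_iso1, comp_idr. }
  rewrite (comp_assoc _ _ _ _ _ _ _ (f ⊗⊗ _)), <- assoc_nat. nrm. now rewrite ai2k.
Qed.
Lemma lunit_inv_nat {A B : Ob C} (f : Hom A B) : (idm I ⊗⊗ f) ∘ lunit_inv A = lunit_inv B ∘ f.
Proof.
  transitivity ((lunit_inv B ∘ lunit B) ∘ ((idm I ⊗⊗ f) ∘ lunit_inv A)).
  { now rewrite lunit_iso2, comp_idl. }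
  nrm. rewrite (comp_assoc _ _ _ _ _ _ _ (lunit B)), lunit_nat. nrm. now rewrite lunit_iso1, comp_idr.
Qed.
Lemma runit_inv_nat {A B : Ob C} (f : Hom A B) : (f ⊗⊗ idm I) ∘ runit_inv A = runit_inv B ∘ f.
Proof.
  transitivity ((runit_inv B ∘ runit B) ∘ ((f ⊗⊗ idm I) ∘ runit_inv A)).
  { now rewrite runit_iso2, comp_idl. }
  nrm. rewrite (comp_assoc _ _ _ _ _ _ _ (runit B)), runit_nat. nrm. now rewrite runit_iso1, comp_idr.
Qed.
Lemma T1 {A : Ob C} (f g : Hom A I) : f = g.
Proof. now rewrite (unit_terminal _ _ f), (unit_terminal _ _ g). Qed.
Lemma TI {A : Ob C} (f g : Hom A (I ⊗ I)) : f = g.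
Proof.
  rewrite <- (comp_idl _ _ _ f), <- (comp_idl _ _ _ g), <- (lunit_iso2 _ I).
  nrm. f_equal. apply T1.
Qed.


Lemma an_k {A A' B B' D D' Z : Ob C} (f : Hom A A') (g : Hom B B') (h : Hom D D') (k : Hom Z _) :
  assoc A' B' D' ∘ (((f ⊗⊗ g) ⊗⊗ h) ∘ k) = (f ⊗⊗ (g ⊗⊗ h)) ∘ (assoc A B D ∘ k).
Proof. now rewrite !comp_assoc, assoc_nat. Qed.
Lemma ain_k {A A' B B' D D' Z : Ob C} (f : Hom A A') (g : Hom B B') (h : Hom D D') (k : Hom Z _) :
  assoc_inv A' B' D' ∘ ((f ⊗⊗ (g ⊗⊗ h)) ∘ k) = ((f ⊗⊗ g) ⊗⊗ h) ∘ (assoc_inv A B D ∘ k).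
Proof. now rewrite !comp_assoc, assoc_inv_nat. Qed.
Lemma ln_k {A B Z : Ob C} (f : Hom A B) (k : Hom Z _) : lunit B ∘ ((idm I ⊗⊗ f) ∘ k) = f ∘ (lunit A ∘ k).
Proof. now rewrite !comp_assoc, lunit_nat. Qed.
Lemma rn_k {A B Z : Ob C} (f : Hom A B) (k : Hom Z _) : runit B ∘ ((f ⊗⊗ idm I) ∘ k) = f ∘ (runit A ∘ k).
Proof. now rewrite !comp_assoc, runit_nat. Qed.
Lemma lin_k {A B Z : Ob C} (f : Hom A B) (k : Hom Z _) : (idm I ⊗⊗ f) ∘ (lunit_inv A ∘ k) = lunit_inv B ∘ (f ∘ k).
Proof. now rewrite !comp_assoc, lunit_inv_nat. Qed.
Lemma rin_k {A B Z : Ob C} (f : Hom A B) (k : Hom Z _) : (f ⊗⊗ idm I) ∘ (runit_inv A ∘ k) = runit_inv B ∘ (f ∘ k).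
Proof. now rewrite !comp_assoc, runit_inv_nat. Qed.
Lemma sn_k {A A' B B' Z : Ob C} (f : Hom A A') (g : Hom B B') (k : Hom Z _) :
  swap A' B' ∘ ((f ⊗⊗ g) ∘ k) = (g ⊗⊗ f) ∘ (swap A B ∘ k).
Proof. now rewrite !comp_assoc, swap_nat. Qed.

Lemma tr_inj {A B : Ob C} (f g : Hom A B) : f ⊗⊗ idm I = g ⊗⊗ idm I -> f = g.
Proof.
  intro E. transitivity (runit B ∘ ((f ⊗⊗ idm I) ∘ runit_inv A)).
  - rewrite comp_assoc, runit_nat. nrm. isos. reflexivity.
  - rewrite E, comp_assoc, runit_nat. nrm. isos. reflexivity.
Qed.
Lemma tl_inj {A B : Ob C} (f g : Hom A B) : idm I ⊗⊗ f = idm I ⊗⊗ g -> f = g.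
Proof.
  intro E. transitivity (lunit B ∘ ((idm I ⊗⊗ f) ∘ lunit_inv A)).
  - rewrite comp_assoc, lunit_nat. nrm. isos. reflexivity.
  - rewrite E, comp_assoc, lunit_nat. nrm. isos. reflexivity.
Qed.

Lemma K1 (A B : Ob C) : runit (A ⊗ B) = (idm A ⊗⊗ runit B) ∘ assoc A B I.
Proof.
  apply tr_inj.
  assert (E: assoc A B I ∘ (runit (A⊗B) ⊗⊗ idm I)
             = assoc A B I ∘ (((idm A ⊗⊗ runit B) ∘ assoc A B I) ⊗⊗ idm I)).
  { rewrite <- (triangle _ (A⊗B) I). rewrite <- (tens_id _ A B).
    rewrite comp_assoc, assoc_nat. nrm. rewrite pentagon. nrm.
    rewrite tc_k, triangle, comp_idl. rewrite <- an_k. tcs. reflexivity. }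
  transitivity (assoc_inv A B I ∘ (assoc A B I ∘ (runit (A⊗B) ⊗⊗ idm I))). { now isos. }
  rewrite E. now isos.
Qed.

Lemma K2 (A B : Ob C) : lunit (A ⊗ B) ∘ assoc I A B = lunit A ⊗⊗ idm B.
Proof.
  apply tl_inj.
  assert (E: (idm I ⊗⊗ lunit (A⊗B)) ∘ ((idm I ⊗⊗ assoc I A B) ∘ (assoc I (I⊗A) B ∘ (assoc I I A ⊗⊗ idm B)))
   = (idm I ⊗⊗ (lunit A ⊗⊗ idm B)) ∘ (assoc I (I⊗A) B ∘ (assoc I I A ⊗⊗ idm B))).
  { rewrite <- pentagon. rewrite comp_assoc, triangle. rewrite <- (tens_id _ A B).
    rewrite <- assoc_nat. rewrite <- (triangle _ I A). rewrite <- an_k. rewrite tc, comp_idl. reflexivity. }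
  assert (E2 : forall Z (f g : Hom (I ⊗ (I ⊗ A) ⊗ B) Z),
     f ∘ (assoc I (I⊗A) B ∘ (assoc I I A ⊗⊗ idm B)) = g ∘ (assoc I (I⊗A) B ∘ (assoc I I A ⊗⊗ idm B)) -> f = g).
  { intros Z f g H.
    transitivity (f ∘ (assoc I (I⊗A) B ∘ (assoc I I A ⊗⊗ idm B)) ∘ ((assoc_inv I I A ⊗⊗ idm B) ∘ assoc_inv I (I⊗A) B)).
    - nrm. rewrite tc_k. isos. reflexivity.
    - rewrite H. nrm. rewrite tc_k. isos. reflexivity. }
  apply E2. rewrite <- E. nrm. rewrite tc_k, comp_idl. reflexivity.
Qed.

Lemma Rinv (X : Ob C) : runit_inv X = (idm X ⊗⊗ del X) ∘ copy X.
Proof.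
  transitivity (runit_inv X ∘ (runit X ∘ (idm X ⊗⊗ del X) ∘ copy X)).
  - now rewrite copy_counit_r, comp_idr.
  - nrm. now isos.
Qed.
Lemma Linv (X : Ob C) : lunit_inv X = (del X ⊗⊗ idm X) ∘ copy X.
Proof.
  transitivity (lunit_inv X ∘ (lunit X ∘ (del X ⊗⊗ idm X) ∘ copy X)).
  - now rewrite copy_counit_l, comp_idr.
  - nrm. now isos.
Qed.
Lemma S1 (X : Ob C) : lunit X ∘ swap X I = runit X.
Proof.
  transitivity (lunit X ∘ swap X I ∘ (runit_inv X ∘ runit X)).
  { now isos. }
  rewrite Rinv. nrm. rewrite sn_k. rw (copy_comm C X). rw (copy_counit_l C X). reflexivity.
Qed.
Lemma SXI (X : Ob C) : swap X I = lunit_inv X ∘ runit X.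
Proof. rewrite <- S1. nrm. now isos. Qed.
Lemma SIX (X : Ob C) : swap I X = runit_inv X ∘ lunit X.
Proof.
  transitivity (swap I X ∘ (swap X I ∘ (runit_inv X ∘ lunit X))).
  - rewrite SXI. nrm. isos. reflexivity.
  - now isos.
Qed.
Lemma LIRI : lunit_inv I = runit_inv I.
Proof. apply TI. Qed.
Lemma LIRI' : lunit I = runit I.
Proof. apply T1. Qed.

Lemma K1i (A B : Ob C) : assoc A B I ∘ runit_inv (A⊗B) = idm A ⊗⊗ runit_inv B.
Proof.
  transitivity ((idm A ⊗⊗ runit_inv B) ∘ ((idm A ⊗⊗ runit B) ∘ assoc A B I) ∘ runit_inv (A⊗B)).
  - nrm. rewrite tc_k. isos. reflexivity.
  - rewrite <- K1. nrm. isos. reflexivity.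
Qed.
Lemma K1i' (A B : Ob C) : assoc_inv A B I ∘ (idm A ⊗⊗ runit_inv B) = runit_inv (A⊗B).
Proof. rewrite <- K1i. nrm. now isos. Qed.
Lemma K2i (A B : Ob C) : assoc_inv I A B = (lunit_inv A ⊗⊗ idm B) ∘ lunit (A⊗B).
Proof.
  transitivity ((lunit_inv A ⊗⊗ idm B) ∘ (lunit A ⊗⊗ idm B) ∘ assoc_inv I A B).
  - rewrite tc. isos. reflexivity.
  - rewrite <- K2. nrm. isos. reflexivity.
Qed.
Lemma TRi (A B : Ob C) : assoc A I B ∘ (runit_inv A ⊗⊗ idm B) = idm A ⊗⊗ lunit_inv B.
Proof.
  transitivity ((idm A ⊗⊗ lunit_inv B) ∘ ((idm A ⊗⊗ lunit B) ∘ assoc A I B) ∘ (runit_inv A ⊗⊗ idm B)).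
  - nrm. rewrite tc_k. isos. reflexivity.
  - rewrite triangle. nrm. rewrite tc. isos. reflexivity.
Qed.

Lemma M1 {A B X D A' B' X' D' : Ob C} (f1 : Hom A A') (f2 : Hom B B') (f3 : Hom X X') (f4 : Hom D D') :
  mid4 A' B' X' D' ∘ ((f1 ⊗⊗ f2) ⊗⊗ (f3 ⊗⊗ f4)) = ((f1 ⊗⊗ f3) ⊗⊗ (f2 ⊗⊗ f4)) ∘ mid4 A B X D.
Proof.
  unfold mid4.
  transitivity (assoc_inv A' X' (B'⊗D') ∘ ((f1 ⊗⊗ (assoc X' B' D' ∘ (swap B' X' ⊗⊗ idm D') ∘ assoc_inv B' X' D' ∘ (f2 ⊗⊗ (f3 ⊗⊗ f4)))) ∘ assoc A B (X⊗D))).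
  { nrm. rewrite assoc_nat. nrm. tcs. reflexivity. }
  transitivity (assoc_inv A' X' (B'⊗D') ∘ ((f1 ⊗⊗ ((f3 ⊗⊗ (f2 ⊗⊗ f4)) ∘ assoc X B D ∘ (swap B X ⊗⊗ idm D) ∘ assoc_inv B X D)) ∘ assoc A B (X⊗D))).
  { f_equal. f_equal. f_equal. nrm. rewrite assoc_inv_nat. rewrite tc_k, swap_nat, comp_idl.
    rewrite <- an_k. rewrite tc_k, comp_idr. reflexivity. }
  nrm. rewrite <- ain_k. tcs. reflexivity.
Qed.
Lemma M1k {A B X D A' B' X' D' Z : Ob C} (f1 : Hom A A') (f2 : Hom B B') (f3 : Hom X X') (f4 : Hom D D') (k : Hom Z _) :
  mid4 A' B' X' D' ∘ (((f1 ⊗⊗ f2) ⊗⊗ (f3 ⊗⊗ f4)) ∘ k) = ((f1 ⊗⊗ f3) ⊗⊗ (f2 ⊗⊗ f4)) ∘ (mid4 A B X D ∘ k).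
Proof. now rewrite !comp_assoc, M1. Qed.

Lemma MI (X D : Ob C) : mid4 I I X D ∘ (lunit_inv I ⊗⊗ idm (X⊗D)) = (lunit_inv X ⊗⊗ lunit_inv D) ∘ lunit (X⊗D).
Proof.
  unfold mid4. nrm. rewrite LIRI, TRi. tcs. rewrite (K2i X D). nrm. isos. rewrite tc, comp_idl, SIX. nrm. isos.
  rewrite TRi, assoc_inv_nat, K2i. tcs. reflexivity.
Qed.

Lemma MIk (X D Z : Ob C) (k : Hom Z _) : mid4 I I X D ∘ ((lunit_inv I ⊗⊗ idm (X⊗D)) ∘ k) = (lunit_inv X ⊗⊗ lunit_inv D) ∘ (lunit (X⊗D) ∘ k).
Proof. now rewrite !comp_assoc, MI. Qed.

Lemma CP1 (B K : Ob C) : (idm (B⊗K) ⊗⊗ (runit B ∘ (idm B ⊗⊗ del K))) ∘ (mid4 B B K K ∘ (idm (B⊗B) ⊗⊗ copy K))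
  = assoc_inv B K B ∘ ((idm B ⊗⊗ swap B K) ∘ assoc B B K).
Proof.
  transitivity ((idm (B⊗K) ⊗⊗ runit B) ∘ (((idm B ⊗⊗ idm K) ⊗⊗ (idm B ⊗⊗ del K)) ∘ (mid4 B B K K ∘ (idm (B⊗B) ⊗⊗ copy K)))).
  { tcs. reflexivity. }
  rewrite <- M1k. tcs. rewrite <- Rinv. unfold mid4. nrm.
  rewrite <- (tens_id _ B B). rewrite assoc_nat. tcs. rewrite K1i'. rewrite runit_inv_nat.
  rewrite (comp_assoc _ _ _ _ _ _ _ (assoc K B I)), K1i.
  rewrite <- (tens_id _ B K). rewrite <- ain_k. tcs. isos. reflexivity.
Qed.

Lemma HX (X B K : Ob C) : swap X (B⊗K) ∘ (assoc X B K ∘ (swap B X ⊗⊗ idm K))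
  = assoc_inv B K X ∘ ((idm B ⊗⊗ swap X K) ∘ assoc B X K).
Proof.
  transitivity (assoc_inv B K X ∘ ((assoc B K X ∘ (swap X (B⊗K) ∘ assoc X B K)) ∘ (swap B X ⊗⊗ idm K))).
  { nrm. isos. reflexivity. }
  rewrite hexagon. nrm. tcs. isos. reflexivity.
Qed.

Lemma L4 {X Y : Ob C} (f : Hom I (X ⊗ Y)) (g : Hom (Y ⊗ I) X) :
  is_cond2 f g -> swap X Y ∘ f = pairing (idm Y) (g ∘ runit_inv Y) ∘ marg2 f.
Proof.
  unfold is_cond2, pairing. intro H. rewrite H at 1. nrm.
  rewrite sn_k, swk, copy_unit, LIRI, runit_inv_nat, rin_k. rw (K1i Y Y). tcs. reflexivity.
Qed.

Lemma L5a {Y Z W : Ob C} (h : Hom Y Z) (k : Hom W Y) :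
  lunit Z ∘ ((del Y ⊗⊗ idm Z) ∘ ((idm Y ⊗⊗ h) ∘ (copy Y ∘ k))) = h ∘ k.
Proof.
  rewrite tc_k, comp_idl, comp_idr, split_r. nrm. rewrite ln_k. rw (copy_counit_l C Y). reflexivity.
Qed.

Lemma marg_eq {W Z Z' Y : Ob C} (t : Hom Z Z') (f : Hom W (Z ⊗ Y)) :
  marg2 ((t ⊗⊗ idm Y) ∘ f) = marg2 f.
Proof. unfold marg2. nrm. rewrite tc_k, comp_idl. f_equal. f_equal. f_equal. apply T1. Qed.

Lemma L3 {A Z Z' Y : Ob C} (t : Hom Z Z') (f : Hom A (Z ⊗ Y)) g :
  is_cond2 f g -> is_cond2 ((t ⊗⊗ idm Y) ∘ f) (t ∘ g).
Proof.
  unfold is_cond2. rewrite marg_eq. intro H. rewrite H at 1. nrm. rewrite tc_k, comp_idl. reflexivity.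
Qed.

Lemma L5 {X Y : Ob C} (f : Hom I (X ⊗ Y)) (g1 g2 : Hom (Y ⊗ I) X) (w : Hom I Y) :
  is_cond2 f g1 -> is_cond2 f g2 -> abs_cont w (marg2 f) ->
  g1 ∘ runit_inv Y ∘ w = g2 ∘ runit_inv Y ∘ w.
Proof.
  intros H1 H2 Ha.
  assert (E : as_eq w (g1 ∘ runit_inv Y) (g2 ∘ runit_inv Y)).
  { apply Ha. unfold as_eq. rewrite <- (L4 _ _ H1), <- (L4 _ _ H2). reflexivity. }
  unfold as_eq, pairing in E. rewrite <- !comp_assoc in E.
  rewrite <- (L5a (g1 ∘ runit_inv Y) w), <- (L5a (g2 ∘ runit_inv Y) w).
  rewrite E. reflexivity.
Qed.

Lemma Gp (A X : Ob C) : lunit (I⊗X) ∘ ((del (A⊗X) ⊗⊗ idm (I⊗X)) ∘ (mid4 A I X X ∘ (runit_inv A ⊗⊗ copy X))) = del A ⊗⊗ idm X.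
Proof.
  rewrite del_tensor.
  transitivity (lunit (I⊗X) ∘ ((lunit I ⊗⊗ idm (I⊗X)) ∘ (((del A ⊗⊗ del X) ⊗⊗ (idm I ⊗⊗ idm X)) ∘ (mid4 A I X X ∘ (runit_inv A ⊗⊗ copy X))))).
  { tcs. reflexivity. }
  rewrite <- M1k. tcs. rewrite runit_inv_nat, <- Linv, <- LIRI.
  replace ((lunit_inv I ∘ del A) ⊗⊗ lunit_inv X) with ((lunit_inv I ⊗⊗ idm (I⊗X)) ∘ (del A ⊗⊗ lunit_inv X)) by (tcs; reflexivity).
  rewrite MIk. tcs. isos. rewrite ln_k. rewrite (split_r (del A) (lunit_inv X)). nrm. rewrite ln_k. isos. reflexivity.
Qed.

Lemma V (A X : Ob C) : ((lunit X ∘ (del A ⊗⊗ idm X)) ⊗⊗ idm (I⊗X)) ∘ (mid4 A I X X ∘ (runit_inv A ⊗⊗ copy X))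
  = swap (I⊗X) X ∘ ((lunit_inv X ⊗⊗ idm X) ∘ (copy X ∘ (lunit X ∘ (del A ⊗⊗ idm X)))).
Proof.
  transitivity ((lunit X ⊗⊗ idm (I⊗X)) ∘ (((del A ⊗⊗ idm X) ⊗⊗ (idm I ⊗⊗ idm X)) ∘ (mid4 A I X X ∘ (runit_inv A ⊗⊗ copy X)))).
  { tcs. reflexivity. }
  rewrite <- M1k. tcs. rewrite runit_inv_nat, <- LIRI.
  replace ((lunit_inv I ∘ del A) ⊗⊗ copy X) with ((lunit_inv I ⊗⊗ idm (X⊗X)) ∘ ((idm I ⊗⊗ copy X) ∘ (del A ⊗⊗ idm X))) by (tcs; reflexivity).
  rewrite MIk, ln_k. tcs. isos. rewrite sn_k. rw (copy_comm C X). reflexivity.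
Qed.

Lemma U (A X : Ob C) : (idm (I⊗X) ⊗⊗ (lunit X ∘ (del I ⊗⊗ idm X))) ∘ (copy (I⊗X) ∘ (del A ⊗⊗ idm X))
  = (lunit_inv X ⊗⊗ idm X) ∘ (copy X ∘ (lunit X ∘ (del A ⊗⊗ idm X))).
Proof.
  rewrite copy_tensor, copy_unit, del_unit, tens_id, comp_idr. tcs.
  replace ((lunit_inv I ∘ del A) ⊗⊗ copy X) with ((lunit_inv I ⊗⊗ idm (X⊗X)) ∘ ((idm I ⊗⊗ copy X) ∘ (del A ⊗⊗ idm X))) by (tcs; reflexivity).
  rewrite MIk, ln_k. tcs. isos. reflexivity.
Qed.

Lemma HXk (X B K Z : Ob C) (k : Hom Z _) : swap X (B⊗K) ∘ (assoc X B K ∘ ((swap B X ⊗⊗ idm K) ∘ k))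
  = assoc_inv B K X ∘ ((idm B ⊗⊗ swap X K) ∘ (assoc B X K ∘ k)).
Proof. rewrite !comp_assoc. f_equal. rewrite <- !comp_assoc. apply HX. Qed.
Lemma CP1k (B K Z : Ob C) (k : Hom Z _) : (idm (B⊗K) ⊗⊗ (runit B ∘ (idm B ⊗⊗ del K))) ∘ (mid4 B B K K ∘ ((idm (B⊗B) ⊗⊗ copy K) ∘ k))
  = assoc_inv B K B ∘ ((idm B ⊗⊗ swap B K) ∘ (assoc B B K ∘ k)).
Proof. rewrite !comp_assoc. f_equal. rewrite <- !comp_assoc. apply CP1. Qed.
Lemma PM (Y B K : Ob C) : lunit (B⊗K) ∘ ((del Y ⊗⊗ idm (B⊗K)) ∘ assoc Y B K) = (lunit B ∘ (del Y ⊗⊗ idm B)) ⊗⊗ idm K.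
Proof. rewrite <- tens_id, <- assoc_nat, comp_assoc, K2, tc, comp_idl. reflexivity. Qed.
Lemma PMk (Y B K Z : Ob C) (k : Hom Z _) : lunit (B⊗K) ∘ ((del Y ⊗⊗ idm (B⊗K)) ∘ (assoc Y B K ∘ k)) = ((lunit B ∘ (del Y ⊗⊗ idm B)) ⊗⊗ idm K) ∘ k.
Proof. rewrite <- PM. now nrm. Qed.
Lemma PUSH (B K X : Ob C) (p : Hom B X) :
  (idm (B⊗K) ⊗⊗ p) ∘ (assoc_inv B K B ∘ ((idm B ⊗⊗ swap B K) ∘ assoc B B K))
  = assoc_inv B K X ∘ ((idm B ⊗⊗ swap X K) ∘ (assoc B X K ∘ ((idm B ⊗⊗ p) ⊗⊗ idm K))).
Proof.
  rewrite <- (tens_id _ B K). rewrite <- ain_k. rewrite assoc_nat. tcs. rewrite <- swap_nat. reflexivity.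
Qed.
Lemma PUSHk (B K X Z : Ob C) (p : Hom B X) (k : Hom Z _) :
  (idm (B⊗K) ⊗⊗ p) ∘ (assoc_inv B K B ∘ ((idm B ⊗⊗ swap B K) ∘ (assoc B B K ∘ k)))
  = assoc_inv B K X ∘ ((idm B ⊗⊗ swap X K) ∘ (assoc B X K ∘ (((idm B ⊗⊗ p) ⊗⊗ idm K) ∘ k))).
Proof. rewrite !comp_assoc. f_equal. rewrite <- !comp_assoc. apply PUSH. Qed.

Lemma PHI (A X K : Ob C) :
  swap X ((I⊗X)⊗K) ∘ (((lunit X ∘ (del A ⊗⊗ idm X)) ⊗⊗ idm ((I⊗X)⊗K)) ∘ (assoc (A⊗X) (I⊗X) K ∘ ((mid4 A I X X ∘ (runit_inv A ⊗⊗ copy X)) ⊗⊗ idm K)))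
  = (idm ((I⊗X)⊗K) ⊗⊗ (lunit X ∘ (del I ⊗⊗ idm X))) ∘ ((idm ((I⊗X)⊗K) ⊗⊗ (runit (I⊗X) ∘ (idm (I⊗X) ⊗⊗ del K)))
    ∘ (copy ((I⊗X)⊗K) ∘ (lunit ((I⊗X)⊗K) ∘ ((del (A⊗X) ⊗⊗ idm ((I⊗X)⊗K)) ∘ (assoc (A⊗X) (I⊗X) K ∘ ((mid4 A I X X ∘ (runit_inv A ⊗⊗ copy X)) ⊗⊗ idm K)))))).
Proof.
  set (B := I ⊗ X).
  transitivity (swap X (B⊗K) ∘ (assoc X B K ∘ ((((lunit X ∘ (del A ⊗⊗ idm X)) ⊗⊗ idm B) ∘ (mid4 A I X X ∘ (runit_inv A ⊗⊗ copy X))) ⊗⊗ idm K))).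
  { f_equal. rewrite <- (tens_id _ B K). rewrite <- an_k. tcs. reflexivity. }
  rewrite V.
  rewrite <- (comp_idl _ _ _ (idm K)), <- tc. rewrite HXk. rewrite comp_idl.
  rewrite PMk, tc, comp_idl. nrm. unfold B. rewrite Gp. fold B.
  rewrite (copy_tensor C B K). nrm. rewrite tc, comp_idr.
  replace ((copy B ∘ (del A ⊗⊗ idm X)) ⊗⊗ copy K) with ((idm (B⊗B) ⊗⊗ copy K) ∘ ((copy B ∘ (del A ⊗⊗ idm X)) ⊗⊗ idm K)) by (tcs; reflexivity).
  rewrite CP1k. rewrite PUSHk. tcs. unfold B. rewrite U. reflexivity.
Qed.

Lemma LQ (A X : Ob C) (o : Hom I X) :
  ((idm A ⊗⊗ (o ∘ del X)) ⊗⊗ idm (I⊗X)) ∘ (mid4 A I X X ∘ (runit_inv A ⊗⊗ copy X))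
  = mid4 A I X X ∘ (runit_inv A ⊗⊗ ((o ⊗⊗ idm X) ∘ lunit_inv X)).
Proof.
  rewrite <- (tens_id _ I X). rewrite <- M1k. rewrite Linv. tcs. reflexivity.
Qed.

Lemma EW (X K : Ob C) (o : Hom I X) (oK : Hom I K) :
  (lunit X ∘ (del I ⊗⊗ idm X)) ∘ ((runit (I⊗X) ∘ (idm (I⊗X) ⊗⊗ del K)) ∘ tens_st (tens_st (idm I) o) oK) = o.
Proof.
  unfold tens_st. nrm. rewrite tc_k, comp_idl. rewrite (T1 (del K ∘ oK) (idm I)).
  rewrite rn_k. nrm. rewrite <- LIRI', lunit_iso1, comp_idr. rewrite del_unit, tens_id, comp_idl, ln_k. rewrite lunit_iso1, comp_idr. reflexivity.
Qed.

Lemma BETA (A X : Ob C) (o : Hom I X) (Ho : deterministic o) (b : Hom I (A ⊗ X)) (c : Hom (X ⊗ I) A) :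
  is_cond2 b c -> marg2 b = o -> (idm A ⊗⊗ (o ∘ del X)) ∘ b = b.
Proof.
  unfold is_cond2. intros H Hm. rewrite Hm in H. rewrite H. nrm.
  transitivity ((c ⊗⊗ idm X) ∘ ((idm (X⊗I) ⊗⊗ (o ∘ del X)) ∘ (swap X (X ⊗ I) ∘ (assoc X X I ∘ ((copy X ⊗⊗ idm I) ∘ ((o ⊗⊗ idm I) ∘ copy I)))))).
  { tcs. reflexivity. }
  f_equal. rewrite <- sn_k. f_equal. rewrite <- (tens_id _ X I). rewrite <- an_k. f_equal.
  tcs. unfold deterministic in Ho. rewrite Ho. tcs. rewrite (T1 (del X ∘ o) (idm I)). rewrite comp_idr. reflexivity.
Qed.
End S.
Open Scope mc_scope.
Ltac nrm := repeat rewrite <- comp_assoc; rewrite ?comp_idl, ?comp_idr.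
Ltac tcs := nrm; repeat (rewrite tc_k || rewrite tc); rewrite ?tens_id; nrm; rewrite ?tens_id, ?comp_idl, ?comp_idr.
Theorem proposition5p14 (C : MarkovCat) (HC : has_conditionals C)
    (HP : precise_supports C) (X : Ob C) (o : Hom unit X)
    (Ho : deterministic o) :
  obs_equiv (mkObs X (copy X) o)
            (mkObs X ((o ⊗⊗ idm X) ∘ lunit_inv X) o).
Proof.
  intros A Psi HPsi. destruct Psi as [K psi oK].
  unfold state_equiv, obs_comp, obs_tens, obs_id. cbn.
  set (w := tens_st (tens_st (idm unit) o) oK).
  set (fF := mid4 A unit X X ∘ (runit_inv A ⊗⊗ copy X)).
  set (fP := assoc (A ⊗ X) (unit ⊗ X) K ∘ (fF ⊗⊗ idm K) ∘ psi).
  set (fQ := assoc (A ⊗ X) (unit ⊗ X) K ∘ ((mid4 A unit X X ∘ (runit_inv A ⊗⊗ ((o ⊗⊗ idm X) ∘ lunit_inv X))) ⊗⊗ idm K) ∘ psi).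
  set (t' := idm A ⊗⊗ (o ∘ del X)).
  assert (HQ : fQ = (t' ⊗⊗ idm ((unit ⊗ X) ⊗ K)) ∘ fP).
  { unfold fQ, fP, fF, t'. rewrite <- LQ. rewrite <- (tens_id _ (unit ⊗ X) K). nrm. rewrite <- an_k. tcs. reflexivity. }
  assert (Hmg : marg2 fQ = marg2 fP) by (rewrite HQ; apply marg_eq).
  rewrite Hmg.
  destruct (classic (abs_cont w (marg2 fP))) as [Ha|Hna].
  2:{ right. split; exact Hna. }
  left. split; [exact Ha | split; [exact Ha | ]].
  intros cP cQ HcP HcQ.
  assert (HcQ' : is_cond2 fQ (t' ∘ cP)) by (rewrite HQ; apply L3; exact HcP).
  rewrite (L5 fQ cQ (t' ∘ cP) w HcQ HcQ' ltac:(rewrite Hmg; exact Ha)).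
  assert (AS : as_eq (marg2 fP) ((lunit X ∘ (del A ⊗⊗ idm X)) ∘ (cP ∘ runit_inv ((unit ⊗ X) ⊗ K)))
     ((lunit X ∘ (del unit ⊗⊗ idm X)) ∘ (runit (unit⊗X) ∘ (idm (unit⊗X) ⊗⊗ del K)))).
  { unfold as_eq.
    transitivity ((idm _ ⊗⊗ (lunit X ∘ (del A ⊗⊗ idm X))) ∘ (pairing (idm _) (cP ∘ runit_inv ((unit ⊗ X) ⊗ K)) ∘ marg2 fP)).
    { unfold pairing. tcs. reflexivity. }
    rewrite <- (L4 _ _ HcP). rewrite <- sn_k.
    pose proof (kv _ _ (PHI A X K) _ psi) as P. rewrite <- !comp_assoc in P.
    unfold fP, fF, marg2, pairing. nrm. rewrite P. tcs. reflexivity. }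
  apply Ha in AS.
  assert (Hm : marg2 (cP ∘ runit_inv ((unit ⊗ X) ⊗ K) ∘ w) = o).
  { unfold marg2.
    transitivity ((lunit X ∘ (del A ⊗⊗ idm X) ∘ (cP ∘ runit_inv ((unit ⊗ X) ⊗ K))) ∘ w). { nrm. reflexivity. }
    rewrite <- L5a. unfold as_eq, pairing in AS. rewrite <- !comp_assoc in AS. nrm. rewrite AS.
    rewrite L5a. unfold w. pose proof (EW X K o oK) as HE. rewrite <- !comp_assoc in HE. nrm. exact HE. }
  destruct (HC unit A X (cP ∘ runit_inv ((unit ⊗ X) ⊗ K) ∘ w)) as [_ [c Hc]].
  pose proof (BETA A X o Ho _ c Hc Hm) as HB.
  symmetry. unfold t' in *. rewrite <- HB. nrm. reflexivity.
Qed.
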